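(* Suppose $U$ satisfies the Main Assumption and $\mu$ is strictly increasing in its $i$-th argument for some index $i$ (i.e. $\mu(\lambda+te_i)>\mu(\lambda)$ for all $\lambda\in\mathbb{R}^n_+$, $t>0$). Then for every extremal of problem (P) whose representation in Theorem 1 has $A_i=0$, we have $x_i\equiv y_i\equiv0$ (regardless of whether $\gamma=0$ or not).
   Context: Setting of Theorem 1: problem (P) on $\mathbb{H}_{2n+1}$ of minimizing $T$ over Lipschitz curves $(x,y,z)$ with $(x,y,z)(0)=0$, $(\dot x,\dot y)\in U$ a.e., $\dot z=\frac12\sum_i(x_i\dot y_i-\dot x_iy_i)$; extremal = projection of a Pontryagin maximum principle solution. Main Assumption: $U=\{(\dot x,\dot y):\mu(\mu_{\Omega_1}(\dot x_1,\dot y_1),\dots,\mu_{\Omega_n}(\dot x_n,\dot y_n))\le1\}$ with $\Omega_i\subset\mathbb{R}^2$ compact convex, $0\in\operatorname{int}\Omega_i$, $\mu_\Omega$ the Minkowski functional, and $\mu:\mathbb{R}^n_+\to\mathbb{R}_+$ continuous, convex, positively homogeneous, nondecreasing in each argument, positive outside $0$. Theorem 1 associates to each extremal constants $\gamma\in\{0,\pm1\}$, $A\in\mathbb{R}^n_+$ not both zero, with $A_i=s_{\Omega_i}(h_i,g_i)$ where $h_i=\varphi_i-\frac12\gamma y_i$, $g_i=\psi_i+\frac12\gamma x_i$ are built from the PMP covector $(\varphi,\psi,\gamma)$, and a measurable $\lambda(t)\in\arg\max_{\lambda\in\Xi}\sum_jA_j\lambda_j$, $\Xi=\{\lambda\in\mathbb{R}^n_+:\mu(\lambda)\le1\}$,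 with $\mu_{\Omega_i}(\dot x_i,\dot y_i)=\lambda_i(t)$. *)

(* Defs.v *)
From HB Require Import structures.
From mathcomp Require Import all_boot all_order all_algebra.
From mathcomp Require Import all_classical all_reals all_analysis.
Set Implicit Arguments. Unset Strict Implicit. Unset Printing Implicit Defensive.
Import Order.TTheory GRing.Theory Num.Theory.
Import numFieldNormedType.Exports.
Local Open Scope classical_set_scope.
Local Open Scope ring_scope.

Section Defs.
Variable R : realType.

Definition minkowski (Om : set (R * R)) (p : R * R) : R :=
  inf [set t : R | 0 < t /\ exists q, Om q /\ p = (t * q.1, t * q.2)].

Definition support_fun (Om : set (R * R)) (h g : R) : R :=
  sup [set h * q.1 + g * q.2 | q in Om].

Definition convex_set2 (Om : set (R * R)) : Prop :=
  forall p q, Om p -> Om q -> forall a : R, 0 <= a <= 1 ->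
    Om (a * p.1 + (1 - a) * q.1, a * p.2 + (1 - a) * q.2).

Definition good_Omega (Om : set (R * R)) : Prop :=
  compact Om /\ convex_set2 Om /\ nbhs (0 : R * R) Om.

Definition nonneg_vec (n : nat) (l : 'rV[R]_n) : Prop := forall j, 0 <= l ord0 j.

Definition unit_vec (n : nat) (i : 'I_n) : 'rV[R]_n := \row_j (j == i)%:R.

Definition good_mu (n : nat) (mu : 'rV[R]_n -> R) : Prop :=
  {within [set l | nonneg_vec l], continuous mu} /\
      (forall a b, nonneg_vec a -> nonneg_vec b -> forall t : R, 0 <= t <= 1 ->
          mu (t *: a + (1 - t) *: b) <= t * mu a + (1 - t) * mu b) /\
      (forall a (c : R), nonneg_vec a -> 0 < c -> mu (c *: a) = c * mu a) /\
      (forall a j (t : R), nonneg_vec a -> 0 <= t -> mu a <= mu (a + t *: unit_vec j)) /\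
      (forall a, nonneg_vec a -> 0 <= mu a) /\
      (forall a, nonneg_vec a -> a != 0 -> 0 < mu a).

(* the control set U of the Main Assumption: (u,v) = (xdot, ydot) *)
Definition in_U (n : nat) (Om : 'I_n -> set (R * R)) (mu : 'rV[R]_n -> R)
    (u v : 'I_n -> R) : Prop :=
  mu (\row_j minkowski (Om j) (u j, v j)) <= 1.

Definition lipschitz_on (T : R) (f : R -> R) : Prop :=
  exists L : R, forall s t, 0 <= s <= T -> 0 <= t <= T -> `|f s - f t| <= L * `|s - t|.

Definition hcov (phi y : R -> R) (gamma : R) (t : R) : R := phi t - gamma / 2 * y t.
Definition gcov (psi x : R -> R) (gamma : R) (t : R) : R := psi t + gamma / 2 * x t.

(* Hamiltonian  H = sum_i phi_i u_i + psi_i v_i + gamma/2 (x_i v_i - u_i y_i)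
                 = sum_i h_i u_i + g_i v_i *)
Definition hamiltonian (n : nat) (x y phi psi : 'I_n -> R -> R) (gamma t : R)
    (u v : 'I_n -> R) : R :=
  \sum_(j < n) (hcov (phi j) (y j) gamma t * u j + gcov (psi j) (x j) gamma t * v j).

(* (x,y,z) on [0,T] together with the covector (phi,psi,gamma) and p0 is a
   solution of the Pontryagin maximum principle for the time-optimal
   problem (P). *)
Definition PMP_solution (n : nat) (Om : 'I_n -> set (R * R)) (mu : 'rV[R]_n -> R)
    (T : R) (x y : 'I_n -> R -> R) (z : R -> R)
    (phi psi : 'I_n -> R -> R) (gamma : R) : Prop :=
  0 < T /\
  (forall j, lipschitz_on T (x j) /\ lipschitz_on T (y j)) /\ lipschitz_on T z /\
  (forall j, x j 0 = 0 /\ y j 0 = 0) /\ z 0 = 0 /\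
  (forall j, lipschitz_on T (phi j) /\ lipschitz_on T (psi j)) /\
  exists p0 : R, 0 <= p0 /\
  (forall t, 0 <= t <= T ->
     p0 != 0 \/ gamma != 0 \/ exists j, phi j t != 0 \/ psi j t != 0) /\
  {ae (@lebesgue_measure R), forall t, 0 <= t <= T ->
     exists u v : 'I_n -> R,
       (forall j, is_derive t (1 : R) (x j) (u j) /\ is_derive t (1 : R) (y j) (v j)) /\
       is_derive t (1 : R) z ((1 / 2) * \sum_(j < n) (x j t * v j - u j * y j t)) /\
       in_U Om mu u v /\
       (forall j, is_derive t (1 : R) (phi j) (- (gamma / 2) * v j) /\
                  is_derive t (1 : R) (psi j) ((gamma / 2) * u j)) /\
       (forall u' v', in_U Om mu u' v' ->
          hamiltonian x y phi psi gamma t u' v' <= hamiltonian x y phi psi gamma t u v) /\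
       hamiltonian x y phi psi gamma t u v = p0}.

End Defs.

(* Main.v *)
Require Import Defs.
From HB Require Import structures.
From mathcomp Require Import all_boot all_order all_algebra.
From mathcomp Require Import all_classical all_reals all_analysis.
From mathcomp Require Import measurable_realfun.
From mathcomp Require Import ring lra.
Import Order.TTheory GRing.Theory Num.Theory.
Import numFieldNormedType.Exports.
Local Open Scope classical_set_scope.
Local Open Scope ring_scope.
Set Implicit Arguments. Unset Strict Implicit. Unset Printing Implicit Defensive.

Lemma deriv0_small (R : realType) (f : R -> R) c e : is_derive c (1:R) f 0 -> 0 < e ->
  exists d, 0 < d /\ forall r, c < r < c + d -> `|f r - f c| <= e * (r - c).
Proof.
move=> [df dv] e0.
move: df; rewrite /derivable /derive in dv *; rewrite dv => H.
have := cvgr_dist_lt _ _ H _ e0.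
move=> -[d /= d0 Hd].
exists d; split => // r /andP[cr rcd].
have hr : r - c != 0 by rewrite subr_eq0 gt_eqF.
have := Hd (r - c) _ hr.
  rewrite /ball_ /= sub0r normrN gtr0_norm ?subr_gt0 // ltrBlDl; move=> /(_ rcd).
rewrite sub0r normrN /GRing.scale /= mulr1 subrK normrM gtr0_norm ?invr_gt0 ?subr_gt0 //.
rewrite ltr_pdivrMl ?subr_gt0 // => /ltW.
by rewrite mulrC.
Qed.
Lemma negl_open (R : realType) (N : set R) (e : R) :
  (@lebesgue_measure R).-negligible N -> 0 < e ->
  exists U, [/\ open U, N `<=` U & (@lebesgue_measure R U <= e%:E)%E].
Proof.
move=> /negligible_outer_measure N0 e0.
have [U [oU NU]] := outer_measure_open_le N e0.
rewrite N0 add0e => Ue.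
by exists U.
Qed.
Section mfacts.
Context (R : realType) (U : set R) (e : R).
Hypotheses (oU : open U) (Ue : (@lebesgue_measure R U <= e%:E)%E).
Let mu := @lebesgue_measure R.
Definition mm (s : R) : R := fine (mu (U `&` `[0, s])).

Let mUs (s : R) : measurable (U `&` `[0, s]).
Proof. by apply: measurableI; [exact: open_measurable|exact: measurable_itv]. Qed.

Let fin (s : R) : (mu (U `&` `[0%R, s]) \is a fin_num).
Proof.
rewrite ge0_fin_numE //; apply: (le_lt_trans _ (le_lt_trans Ue (ltry _))).
by apply: le_measure; [rewrite inE; exact: mUs | rewrite inE; exact: open_measurable | exact: subIsetl].
Qed.

Lemma mm_ge0 (s : R) : 0 <= mm s.
Proof. by rewrite /mm fine_ge0. Qed.

Lemma mm_le (s : R) : mm s <= e.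
Proof.
rewrite /mm -lee_fin fineK //; apply: le_trans Ue.
by apply: le_measure; [rewrite inE; exact: mUs | rewrite inE; exact: open_measurable | exact: subIsetl].
Qed.

Lemma mm_mono (s r : R) : s <= r -> mm s <= mm r.
Proof.
move=> sr; rewrite /mm -lee_fin !fineK //.
apply: le_measure; [rewrite inE; exact: mUs|rewrite inE; exact: mUs|].
apply: setIS => x /=; rewrite !in_itv /= => /andP[-> xs] /=.
exact: le_trans sr.
Qed.

Lemma mm_add (c r : R) : 0 <= c -> c <= r -> `]c, r] `<=` U -> mm c + (r - c) <= mm r.
Proof.
move=> c0 cr cU; rewrite /mm -lee_fin EFinD !fineK //.
have <- : mu `]c, r] = (r - c)%:E.
  rewrite /mu lebesgue_measure_itv /= lte_fin.
  by move: cr; rewrite le_eqVlt => /orP[/eqP->|->]; rewrite ?ltxx ?subrr // -EFinD.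
have HU : mu ((U `&` `[0, c]) `|` `]c, r]) = (mu (U `&` `[0%R, c]) + mu `]c, r])%E.
  apply: measureU; [exact: mUs|exact: measurable_itv|].
  apply/seteqP; split => // x [[_]] /=; rewrite !in_itv /= => /andP[_ xc] /andP[cx _].
  by move: (lt_le_trans cx xc); rewrite ltxx.
rewrite -HU.
apply: le_measure; [rewrite inE; apply: measurableU; [exact: mUs|exact: measurable_itv]|rewrite inE; exact: mUs|].
move=> x [[Ux]|]; rewrite /= !in_itv /=.
  by move=> /andP[-> xc] /=; split => //; exact: le_trans xc cr.
move=> /andP[cx xr]; split; first by apply: cU; rewrite /= in_itv /= cx.
by rewrite xr (le_trans c0 (ltW cx)).
Qed.
End mfacts.

Lemma lip_zero (R : realType) (T L : R) (f : R -> R) (N : set R) :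
  0 < T ->
  (forall s t, 0 <= s <= T -> 0 <= t <= T -> `|f s - f t| <= L * `|s - t|) ->
  (@lebesgue_measure R).-negligible N ->
  (forall t, 0 < t < T -> ~ N t -> is_derive t (1:R) f 0) ->
  forall t, 0 <= t <= T -> f t = f 0.
Proof.
move=> T0 Lf NN Hd.
have L0 : 0 <= L.
  have := Lf 0 T; rewrite lexx ltW // le_refl /= => /(_ isT isT).
  rewrite sub0r normrN (gtr0_norm T0) => H.
  by have := le_trans (normr_ge0 _) H; rewrite pmulr_lge0.
have claim : forall e, 0 < e -> forall t, 0 <= t <= T -> `|f t - f 0| <= e * T + L * e.
  move=> e e0.
  have NN' : (@lebesgue_measure R).-negligible (N `|` [set 0]).
    apply: negligibleU => //; apply/negligibleP; first exact: measurable_set1.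
    exact: lebesgue_measure_set1.
  have [U [oU NU Ue]] := negl_open NN' e0.
  pose P s := `|f s - f 0| <= e * s + L * mm U s.
  pose S := [set s | 0 <= s <= T /\ forall r, 0 <= r <= s -> P r].
  have S0 : S 0.
    split; first by rewrite lexx ltW.
    move=> r; rewrite -eq_le => /eqP <-; rewrite /P subrr normr0 mulr0 add0r.
    by rewrite mulr_ge0 // mm_ge0.
  have ubS : ubound S T by move=> s [/andP[]].
  have hS : has_sup S by split; [exists 0|exists T].
  pose c := sup S.
  have c0 : 0 <= c by exact: sup_upper_bound.
  have cT : c <= T by apply: ge_sup => //; exists 0.
  have Plt : forall r, 0 <= r < c -> P r.
    move=> r /andP[r0 rc].
    have rc' : 0 < c - r by rewrite subr_gt0.
    have [s [_ Hs] /=] := sup_adherent rc' hS.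
    rewrite opprB addrC subrK => rs; apply: Hs; rewrite r0 /=; exact: ltW.
  have Pc : P c.
    rewrite /P; apply/ler_addgt0Pr => d d0.
    have eta0 : 0 < d / (L + 1) by rewrite divr_gt0 // ltr_wpDl.
    have [s [/andP[s0 sT] Hs] /=] := sup_adherent eta0 hS.
    move=> cs.
    have Ss : S s by split => //; rewrite s0 sT.
    have sc : s <= c := sup_upper_bound hS Ss.
    have : P s by apply: Hs; rewrite s0 lexx.
    rewrite /P => Ps.
    have := Lf c s; rewrite c0 cT s0 sT => /(_ isT isT) Lcs.
    have tri := ler_distD (f s) (f c) (f 0).
    have mms := mm_mono oU Ue sc.
    rewrite (@ger0_norm _ (c - s)) ?subr_ge0 // in Lcs.
    have h1 : L * (c - s) <= d.
      have : c - s <= d / (L + 1) by rewrite ltW // ltrBlDl -ltrBlDr.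
      rewrite ler_pdivlMr ?ltr_wpDl // => h.
      apply: le_trans (_ : L * (c - s) <= (c - s) * (L + 1)) h.
      by rewrite mulrC ler_wpM2l ?subr_ge0 // lerDl.
    have h2 : e * s <= e * c by rewrite ler_wpM2l // ltW.
    have h3 : L * mm U s <= L * mm U c by rewrite ler_wpM2l.
    lra.
  have Ple : forall r, 0 <= r <= c -> P r.
    move=> r /andP[r0]; rewrite le_eqVlt => /orP[/eqP -> //|rc].
    by apply: Plt; rewrite r0.
  have cTe : T <= c.
    rewrite leNgt; apply/negP => cT'.
    have [d [d0 Hd']] : exists d, 0 < d /\ forall r, c < r < c + d -> P r.
      have [Nc|Nc] := pselect ((N `|` [set 0]) c).
        have Uc := NU _ Nc.
        have : nbhs c U by apply: open_nbhs_nbhs; split.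
        move=> /nbhs_ballP[d /= d0 dU].
        exists (Order.min d (T - c)); split; first by rewrite lt_min d0 subr_gt0.
        move=> r /andP[cr]; rewrite -ltrBlDl lt_min => /andP[rcd rcT].
        have rT : r <= T by rewrite ltW // -(subrK c r) -ltrBrDr.
        have cU : `]c, r] `<=` U.
          move=> x /=; rewrite in_itv /= => /andP[cx xr]; apply: dU.
          rewrite /ball /= ltr_norml; apply/andP; split; lra.
        have Hm := mm_add oU Ue c0 (ltW cr) cU.
        have := Lf r c; rewrite cT c0 rT (le_trans c0 (ltW cr)) => /(_ isT isT) Lrc.
        rewrite (@gtr0_norm _ (r - c)) ?subr_gt0 // in Lrc.
        have tri := ler_distD (f c) (f r) (f 0).
        have := Pc; rewrite /P /= => Pc'.
        rewrite /P; have h1 : L * mm U c + L * (r - c) <= L * mm U r.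
          by rewrite -mulrDr ler_wpM2l.
        have h2 : e * c <= e * r by rewrite ler_wpM2l // ltW.
        lra.
      have c0' : 0 < c.
        by rewrite lt_neqAle c0 andbT; apply/negP => /eqP c0e; apply: Nc; right.
      have Nc' : ~ N c by move=> Nc'; apply: Nc; left.
      have [d [d0 Hdd]] := deriv0_small (Hd c (introT andP (conj c0' cT')) Nc') e0.
      exists (Order.min d (T - c)); split; first by rewrite lt_min d0 subr_gt0.
      move=> r /andP[cr]; rewrite -ltrBlDl lt_min => /andP[rcd rcT].
      have := Hdd r; rewrite cr -ltrBlDl rcd => /(_ isT) Hr.
      have tri := ler_distD (f c) (f r) (f 0).
      have := Pc; rewrite /P /= => Pc'.
      rewrite /P; have h1 : L * mm U c <= L * mm U r.
        by rewrite ler_wpM2l // (mm_mono oU Ue) // ltW.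
      lra.
    pose r0 := c + Order.min d (T - c) / 2.
    have dm0 : 0 < Order.min d (T - c) by rewrite lt_min d0 subr_gt0.
    have cr0 : c < r0 by rewrite /r0 ltrDl divr_gt0.
    have Sr0 : S r0.
      split.
        rewrite /r0 (le_trans c0 (ltW cr0)) /=.
        have : Order.min d (T - c) <= T - c by rewrite ge_min lexx orbT.
        lra.
      move=> r /andP[r0' rr0]; have [rc|cr] := leP r c; first by apply: Ple; rewrite r0'.
      apply: Hd'; rewrite cr /=; apply: le_lt_trans rr0 _.
      rewrite /r0 ltrD2l; have : Order.min d (T - c) <= d by rewrite ge_min lexx.
      lra.
    have := sup_upper_bound hS Sr0; rewrite -/c; lra.
  move=> t /andP[t0 tT].
  have : P t by apply: Ple; rewrite t0 (le_trans tT cTe).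
  rewrite /P => Pt.
  have h1 : e * t <= e * T by rewrite ler_wpM2l // ltW.
  have h2 : L * mm U t <= L * e by rewrite ler_wpM2l // mm_le.
  lra.
move=> t tT; apply/eqP; rewrite -subr_eq0 -normr_eq0 eq_le normr_ge0 andbT.
apply/ler_addgt0Pr => d d0; rewrite add0r.
have TL0 : 0 < T + L by rewrite ltr_wpDr.
have := claim (d / (T + L)) (divr_gt0 d0 TL0) t tT.
suff -> : d / (T + L) * T + L * (d / (T + L)) = d by [].
by field; rewrite gt_eqF.
Qed.

Lemma ball_pair (R : realType) (r a b : R) : `|a| < r -> `|b| < r -> ball (0 : R * R) r (a, b).
Proof. by move=> ha hb; split; rewrite /ball /= sub0r normrN. Qed.

Lemma compact_bnd (R : realType) (Om : set (R * R)) : compact Om ->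
  exists M, 0 < M /\ forall q, Om q -> `|q.1| <= M /\ `|q.2| <= M.
Proof.
move=> /compact_bounded [M0 [_ HM]].
have M1 : M0 < `|M0| + 1 by rewrite (le_lt_trans (ler_norm _)) // ltrDl.
have := HM _ M1 => HM'.
exists (`|M0| + 1); split; first by rewrite ltr_wpDl.
move=> q /HM' /= Hq; split.
- by apply: le_trans Hq; rewrite [X in _ <= X]/(Num.norm _) /= le_max lexx.
- by apply: le_trans Hq; rewrite [X in _ <= X]/(Num.norm _) /= le_max lexx orbT.
Qed.

Lemma support_zero (R : realType) (Om : set (R * R)) (h g : R) :
  good_Omega Om -> support_fun Om h g = 0 -> h = 0 /\ g = 0.
Proof.
move=> [cO [_ nO]] s0.
have [M [M0 HM]] := compact_bnd cO.
move: nO => /nbhs_ballP [r /= r0 rO].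
pose K := `|h| + `|g| + 1.
have K0 : 0 < K by rewrite ltr_wpDl ?addr_ge0.
pose d := r / (2 * K).
have d0 : 0 < d by rewrite divr_gt0 // mulr_gt0.
have dK : d * K < r.
  have -> : d * K = r / 2 by rewrite /d; field; rewrite gt_eqF.
  lra.
have Oq : Om (d * h, d * g).
  apply: rO; apply: ball_pair; rewrite normrM gtr0_norm //; apply: le_lt_trans dK;
  rewrite ler_wpM2l ?ltW // /K; have := normr_ge0 h; have := normr_ge0 g; lra.
have hS : has_sup [set h * q.1 + g * q.2 | q in Om].
  split; first by exists (h * (d * h) + g * (d * g)), (d * h, d * g).
  exists (`|h| * M + `|g| * M) => _ [q Oq' <-].
  have [H1 H2] := HM q Oq'.
  apply: le_trans (ler_norm _) _; apply: le_trans (ler_normD _ _) _.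
  by rewrite !normrM lerD // ler_wpM2l.
have := sup_upper_bound hS (ex_intro2 _ _ (d * h, d * g) Oq erefl).
rewrite -/(support_fun Om h g) s0 /= => H.
have : h * h + g * g <= 0.
  rewrite -(pmulr_rle0 _ d0); apply: le_trans H; rewrite le_eqVlt; apply/orP; left; apply/eqP; ring.
have hh := sqr_ge0 h; have gg := sqr_ge0 g.
rewrite -!expr2 => H2.
have Hh : h ^+ 2 = 0 by lra.
have Hg : g ^+ 2 = 0 by lra.
by split; apply/eqP; rewrite -sqrf_eq0; apply/eqP.
Qed.

Section mink.
Context (R : realType) (Om : set (R * R)) (gO : good_Omega Om).

Let mset (p : R * R) := [set t : R | 0 < t /\ exists q, Om q /\ p = (t * q.1, t * q.2)].

Let ballr : exists r : R, 0 < r /\ forall a b, `|a| < r -> `|b| < r -> Om (a, b).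
Proof.
case: gO => _ [_ /nbhs_ballP [r /= r0 rO]].
by exists r; split => // a b ha hb; apply: rO; apply: ball_pair.
Qed.

Let lb0 p : lbound (mset p) 0.
Proof. by move=> t [t0 _]; exact: ltW. Qed.

Let in_mset p t (r : R) : 0 < r -> (forall a b, `|a| < r -> `|b| < r -> Om (a, b)) ->
  0 < t -> `|p.1| < t * r -> `|p.2| < t * r -> mset p t.
Proof.
move=> r0 rO t0 h1 h2; split => //; exists (p.1 / t, p.2 / t); split.
  have ti : `|t^-1| = t^-1 by rewrite gtr0_norm ?invr_gt0.
  by apply: rO; rewrite normrM ti ltr_pdivrMr // mulrC.
by case: p h1 h2 => a b /= _ _; congr pair; field; rewrite gt_eqF.
Qed.

Let mset_ne p : mset p !=set0.
Proof.
have [r [r0 rO]] := ballr.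
pose t := (`|p.1| + `|p.2| + 1) / r.
have t0 : 0 < t by rewrite divr_gt0 // ltr_wpDl ?addr_ge0.
have tr : t * r = `|p.1| + `|p.2| + 1 by rewrite /t; field; rewrite gt_eqF.
exists t; apply: (in_mset r0 rO t0); rewrite tr;
  have := normr_ge0 p.1; have := normr_ge0 p.2; lra.
Qed.

Lemma mink_ge0 p : 0 <= Defs.minkowski Om p.
Proof. by rewrite /minkowski; exact: lb_le_inf (mset_ne p) (@lb0 p). Qed.

Lemma mink_zero : Defs.minkowski Om (0, 0) = 0.
Proof.
apply/eqP; rewrite eq_le mink_ge0 andbT.
apply/ler_addgt0Pr => e e0; rewrite add0r.
have [r [r0 rO]] := ballr.
apply: (ge_inf (ex_intro _ 0 (@lb0 (0, 0)))).
by apply: (in_mset r0 rO e0); rewrite /= normr0 mulr_gt0.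
Qed.

Lemma mink_pos p : p != (0, 0) -> 0 < Defs.minkowski Om p.
Proof.
move=> p0.
have [M [M0 HM]] : exists M, 0 < M /\ forall q, Om q -> `|q.1| <= M /\ `|q.2| <= M.
  by case: gO => cO _; exact: compact_bnd.
have pp : 0 < `|p.1| + `|p.2|.
  case: p p0 => a b /= ab; rewrite lt_neqAle addr_ge0 // andbT.
  apply: contra ab => /eqP/esym H.
  have Ha : `|a| = 0 by have := normr_ge0 a; have := normr_ge0 b; lra.
  have Hb : `|b| = 0 by have := normr_ge0 a; have := normr_ge0 b; lra.
  by move: Ha Hb => /normr0_eq0 -> /normr0_eq0 ->.
apply: lt_le_trans (_ : (`|p.1| + `|p.2|) / (2 * M) <= _).
  by rewrite divr_gt0 // mulr_gt0.
apply: lb_le_inf (mset_ne p) _ => t [t0 [q [Oq ->]]] /=.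
have [H1 H2] := HM q Oq.
rewrite ler_pdivrMr ?mulr_gt0 // !normrM gtr0_norm //.
have : t * `|q.1| <= t * M by rewrite ler_wpM2l // ltW.
have : t * `|q.2| <= t * M by rewrite ler_wpM2l // ltW.
lra.
Qed.

Lemma mink_shift (w : R * R) : exists K : R, 0 <= K /\ forall p (s : R), 0 < s ->
  Defs.minkowski Om (p.1 + s * w.1, p.2 + s * w.2) <= Defs.minkowski Om p + s * K.
Proof.
have [r [r0 rO]] := ballr.
pose K := (`|w.1| + `|w.2| + 1) / r.
have K0 : 0 < K by rewrite divr_gt0 // ltr_wpDl ?addr_ge0.
have Oq2 : Om (w.1 / K, w.2 / K).
  have Kr : K * r = `|w.1| + `|w.2| + 1 by rewrite /K; field; rewrite gt_eqF.
  have Ki : `|K^-1| = K^-1 by rewrite gtr0_norm ?invr_gt0.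
  apply: rO; rewrite normrM Ki ltr_pdivrMr // mulrC Kr;
  have := normr_ge0 w.1; have := normr_ge0 w.2; lra.
exists K; split; first exact: ltW.
move=> p s s0.
apply/ler_addgt0Pr => e e0.
have [a [a0 [q [Oq pq]]] ae] := inf_adherent e0 (conj (mset_ne p) (ex_intro _ 0 (@lb0 p))).
have sK0 : 0 < a + s * K by rewrite addr_gt0 // mulr_gt0.
have : mset (p.1 + s * w.1, p.2 + s * w.2) (a + s * K).
  split => //.
  pose al := a / (a + s * K).
  have al0 : 0 <= al by rewrite /al divr_ge0 // ltW.
  have al1 : al <= 1 by rewrite /al ler_pdivrMr // mul1r lerDl mulr_ge0 // ltW.
  have al01 : 0 <= al <= 1 by rewrite al0 al1.
  case: gO => _ [cvx _].
  have := cvx _ _ Oq Oq2 al al01 => Oc.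
  eexists; split; first exact: Oc.
  rewrite pq /= /al; congr pair; field; rewrite ?gt_eqF //.
move=> /(ge_inf (ex_intro _ 0 (@lb0 _))) H.
apply: le_trans H _; rewrite -/(Defs.minkowski Om p); lra.
Qed.
End mink.

Lemma key_max (R : realType) n (Om : 'I_n -> set (R * R)) (mu : 'rV[R]_n -> R)
  (i : 'I_n) (h g u v : 'I_n -> R) :
  (forall j, good_Omega (Om j)) -> good_mu mu ->
  (forall (l : 'rV[R]_n) (t : R), nonneg_vec l -> 0 < t ->
     mu l < mu (l + t *: unit_vec R i)) ->
  in_U Om mu u v ->
  (forall u' v', in_U Om mu u' v' ->
     \sum_(k < n) (h k * u' k + g k * v' k) <= \sum_(k < n) (h k * u k + g k * v k)) ->
  h i = 0 -> g i = 0 -> (exists j, (h j, g j) != (0, 0)) ->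
  u i = 0 /\ v i = 0.
Proof.
move=> gO [_ [cvx [_ [mono [ge0 _]]]]] smono uU Hmax hi gi [j hj].
have ji : j != i by apply: contraNneq hj => ->; rewrite hi gi.
case: (boolP ((u i, v i) == (0, 0))) => [/eqP [-> ->] //| uvi].
exfalso.
pose lam : 'rV[R]_n := \row_k Defs.minkowski (Om k) (u k, v k).
have lami : 0 < lam ord0 i by rewrite /lam mxE mink_pos.
pose l : 'rV[R]_n := \row_k if k == i then 0 else lam ord0 k.
have l_nn : nonneg_vec l.
  by move=> k; rewrite /l /lam !mxE; case: ifP => // _; rewrite mink_ge0.
have lE : l + lam ord0 i *: unit_vec R i = lam.
  apply/rowP => k; rewrite /l !mxE; case: (eqVneq k i) => [->|ki]; rewrite ?mulr1 ?add0r //.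
  by rewrite mulr0 addr0.
have ml1 : mu l < 1.
  by apply: lt_le_trans (smono _ _ l_nn lami) _; rewrite lE.
pose a : 'rV[R]_n := l + 1 *: unit_vec R j.
have a_nn : nonneg_vec a.
  move=> k; rewrite /a !mxE; apply: addr_ge0; first by case: ifP => _ //; exact: mink_ge0.
  by rewrite mul1r ler0n.
pose D := `|mu a - mu l| + 1.
have D0 : 0 < D by rewrite ltr_wpDl.
have mul0 : 0 <= mu l by exact: ge0.
pose al := (1 - mu l) / (2 * D).
have al0 : 0 < al by rewrite divr_gt0 ?mulr_gt0 // subr_gt0.
have alD : al * D = (1 - mu l) / 2 by rewrite /al; field; rewrite gt_eqF.
have al1 : al <= 1.
  have : al * D <= D by rewrite alD; have := ler_norm (mu a - mu l); have := normr_ge0 (mu a - mu l); rewrite /D; lra.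
  by rewrite ger_pMl.
have mla : mu (l + al *: unit_vec R j) < 1.
  have -> : l + al *: unit_vec R j = al *: a + (1 - al) *: l.
    by apply/rowP => k; rewrite !mxE; ring.
  have al01 : 0 <= al <= 1 by rewrite (ltW al0) al1.
  apply: le_lt_trans (cvx _ _ a_nn l_nn al al01) _.
  have : al * (mu a - mu l) <= al * D.
    rewrite ler_wpM2l ?(ltW al0) // /D; apply: le_trans (ler_norm _) _; lra.
  rewrite alD; lra.
have [K [K0 HK]] := mink_shift (gO j) (h j, g j).
pose sg := al / (K + 1).
have sg0 : 0 < sg by rewrite divr_gt0 // ltr_wpDl.
have sgK : sg * K <= al.
  rewrite /sg mulrAC ler_pdivrMr ?ltr_wpDl // ler_wpM2l ?(ltW al0) //; lra.
pose u' := fun k => if k == i then 0 else if k == j then u k + sg * h k else u k.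
pose v' := fun k => if k == i then 0 else if k == j then v k + sg * g k else v k.
have mj : Defs.minkowski (Om j) (u' j, v' j) <= lam ord0 j + al.
  rewrite /u' /v' (negbTE ji) eqxx mxE.
  by apply: le_trans (HK (u j, v j) sg sg0) _; rewrite lerD2l.
pose r' : 'rV[R]_n := \row_k Defs.minkowski (Om k) (u' k, v' k).
have r_nn : nonneg_vec r' by move=> k; rewrite mxE mink_ge0.
pose d := lam ord0 j + al - r' ord0 j.
have d0 : 0 <= d by rewrite /d subr_ge0 mxE.
have rE : r' + d *: unit_vec R j = l + al *: unit_vec R j.
  apply/rowP => k; rewrite !mxE; case: (eqVneq k j) => [->|kj].
    by rewrite (negbTE ji) !mulr1 /d /r' !mxE; ring.
  rewrite !mulr0 !addr0 /u' /v'; case: (eqVneq k i) => [->|ki]; first by rewrite mink_zero.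
  by rewrite (negbTE kj).
have uU' : in_U Om mu u' v'.
  rewrite /in_U -/r'; apply: le_trans (mono _ j _ r_nn d0) _.
  by rewrite rE ltW.
have Hs : \sum_(k < n) (h k * u' k + g k * v' k) =
    \sum_(k < n) (h k * u k + g k * v k) + sg * (h j * h j + g j * g j).
  rewrite [LHS](bigD1 j) // [in RHS](bigD1 j) //=.
  rewrite (eq_bigr (fun k => h k * u k + g k * v k)).
    by rewrite /u' /v' (negbTE ji) eqxx; ring.
  move=> k kj; rewrite /u' /v' (negbTE kj); case: eqP => // ->.
  by rewrite hi gi !mul0r !addr0.
have hg : 0 < h j * h j + g j * g j.
  rewrite lt_neqAle addr_ge0 ?mulr_ge0_le0 ?sqr_ge0 -?expr2 ?sqr_ge0 // andbT.
  apply: contra hj => /eqP/esym H.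
  have Hh : h j ^+ 2 = 0 by have := sqr_ge0 (h j); have := sqr_ge0 (g j); rewrite !expr2 in H *; lra.
  have Hg : g j ^+ 2 = 0 by have := sqr_ge0 (h j); have := sqr_ge0 (g j); rewrite !expr2 in H *; lra.
  by move: Hh Hg => /eqP; rewrite sqrf_eq0 => /eqP -> /eqP; rewrite sqrf_eq0 => /eqP ->.
have := Hmax _ _ uU'; rewrite Hs.
have : 0 < sg * (h j * h j + g j * g j) by rewrite mulr_gt0.
lra.
Qed.

Lemma deriv_zero_interior (R : realType) (F : R -> R) (T s a : R) : 0 < s < T ->
  (forall r, 0 <= r <= T -> F r = 0) -> is_derive s (1:R) F a -> a = 0.
Proof.
move=> /andP[s0 sT] F0 Ha.
have H0 : is_derive s (1:R) (cst 0 : R -> R) 0 := is_derive_cst _ _ _.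
have : \near s, (cst 0 : R -> R) s = F s.
  apply/nbhs_ballP; exists (Num.min s (T - s)) => /=; first by rewrite lt_min s0 subr_gt0.
  move=> r; rewrite /ball /= lt_min => /andP[h1 h2]; rewrite F0 //.
  move: h1 h2; rewrite !ltr_norml => /andP[h1 h1'] /andP[h2 h2'].
  apply/andP; split; lra.
move=> /near_eq_is_derive /(_ H0) H1.
by case: Ha => _ <-; case: H1.
Qed.

Unset Implicit Arguments.

Theorem mainTheorem5 (R : realType) (n : nat) (Om : 'I_n -> set (R * R))
    (mu : 'rV[R]_n -> R) (i : 'I_n) :
  (forall j, good_Omega (Om j)) ->
  good_mu mu ->
  (forall (l : 'rV[R]_n) (t : R), nonneg_vec l -> 0 < t ->
     mu l < mu (l + t *: unit_vec R i)) ->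
  forall (T : R) (x y : 'I_n -> R -> R) (z : R -> R)
         (phi psi : 'I_n -> R -> R) (gamma : R),
  PMP_solution Om mu T x y z phi psi gamma ->
  (forall t, 0 <= t <= T ->
     support_fun (Om i) (hcov (phi i) (y i) gamma t) (gcov (psi i) (x i) gamma t) = 0) ->
  forall t, 0 <= t <= T -> x i t = 0 /\ y i t = 0.
Proof.
move=> gO gmu smono T x y z phi psi gamma PMP Hsup.
case: PMP => T0 [Lxy [Lz [init [z0 [Lpp [p0 [p00 [nontriv Hae]]]]]]]].
have hg0 : forall s, 0 <= s <= T ->
    hcov (phi i) (y i) gamma s = 0 /\ gcov (psi i) (x i) gamma s = 0.
  by move=> s sT; apply: (support_zero (gO i)); exact: Hsup.
case: Hae => N [mN N0 NQ].
have NN : (@lebesgue_measure R).-negligible N by exists N; split.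
have Hui : forall s, 0 < s < T -> ~ N s -> exists u v : 'I_n -> R,
    is_derive s (1:R) (x i) (u i) /\ is_derive s (1:R) (y i) (v i) /\ u i = 0 /\ v i = 0.
  move=> s /andP[s0 sT] Ns.
  have : (0 <= s <= T) by rewrite (ltW s0) (ltW sT).
  have Qs := contrapT (fun h => Ns (NQ s h)).
  move: Qs => /= Qs; move: Qs => /[apply].
  move=> [u [v [Dxy [_ [uU [Dpp [Hmax Hp0]]]]]]].
  exists u, v; split; first exact: (Dxy i).1.
  split; first exact: (Dxy i).2.
  have [hi gi] := hg0 s (introT andP (conj (ltW s0) (ltW sT))).
  case: (eqVneq gamma 0) => [g0|gn0].
    apply: (@key_max R n Om mu i (fun k => hcov (phi k) (y k) gamma s)
       (fun k => gcov (psi k) (x k) gamma s) u v gO gmu smono uU Hmax hi gi).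
    case: (pselect (exists j, (hcov (phi j) (y j) gamma s, gcov (psi j) (x j) gamma s) != (0, 0))) => // Hne.
    exfalso.
    have Hall : forall j, hcov (phi j) (y j) gamma s = 0 /\ gcov (psi j) (x j) gamma s = 0.
      move=> j; case: (eqVneq (hcov (phi j) (y j) gamma s, gcov (psi j) (x j) gamma s) (0, 0)).
        by case.
      by move=> Hj; exfalso; apply: Hne; exists j.
    have Hp : p0 = 0.
      rewrite -Hp0 /hamiltonian big1 // => j _.
      by have [-> ->] := Hall j; rewrite !mul0r addr0.
    have := nontriv s (introT andP (conj (ltW s0) (ltW sT))).
    rewrite Hp g0 eqxx /= => -[//|[//|[j Hj]]].
    have [Hh Hg] := Hall j.
    move: Hh Hg; rewrite /hcov /gcov g0 !mul0r !subr0 !addr0 => Hh Hg.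
    by move: Hj; rewrite Hh Hg eqxx; case.
  have Dh : is_derive s (1:R) (hcov (phi i) (y i) gamma) (- (gamma / 2) * v i - gamma / 2 * v i).
    apply: is_deriveB; first exact: (Dpp i).1.
    apply: is_deriveZ; exact: (Dxy i).2.
  have Dg : is_derive s (1:R) (gcov (psi i) (x i) gamma) (gamma / 2 * u i + gamma / 2 * u i).
    apply: is_deriveD; first exact: (Dpp i).2.
    apply: is_deriveZ; exact: (Dxy i).1.
  have sT' : 0 < s < T by rewrite s0 sT.
  have Eh := deriv_zero_interior sT' (fun r rT => (hg0 r rT).1) Dh.
  have Eg := deriv_zero_interior sT' (fun r rT => (hg0 r rT).2) Dg.
  have E1 : gamma * v i = 0.
    by apply: oppr_inj; rewrite oppr0 -Eh; field.
  have E2 : gamma * u i = 0 by rewrite -Eg; field.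
  move: E1 E2 => /eqP; rewrite mulf_eq0 (negbTE gn0) /= => /eqP ->.
  by move=> /eqP; rewrite mulf_eq0 (negbTE gn0) /= => /eqP ->.
move=> t tT.
have [[Lx HLx] [Ly HLy]] := Lxy i.
have [x0 y0] := init i.
split.
- rewrite -x0; apply: (lip_zero T0 HLx NN _ tT).
  move=> s sT Ns; have [u [v [Du [_ [ui _]]]]] := Hui s sT Ns; by move: Du; rewrite ui.
- rewrite -y0; apply: (lip_zero T0 HLy NN _ tT).
  move=> s sT Ns; have [u [v [_ [Dv [_ vi]]]]] := Hui s sT Ns; by move: Dv; rewrite vi.
Qed.
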